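(* Assume $\rho_\alpha^{\mathrm{dir}}<1$, let $\theta^\star$ be the unique projected Bellman fixed point, and let $x_k:=\theta_k-\theta^\star$. Then for each $k\ge0$ there exists an $\mathcal F_k$-measurable stochastic policy $\mu_k$ such that \[ x_{k+1}=A_{\mu_k}x_k+\alpha b_k+\alpha\xi_{k+1}\quad\text{for all }k\ge0, \] where $\mathbb E[\xi_{k+1}\mid\mathcal F_k]=0$. Moreover, \[ b_k=\Phi^\top(e_{X_k}e_{X_k}^\top-D)\Big(R+\gamma PV_{\theta^\star}-\Phi\theta^\star+(\gamma P\Pi^{\mu_k}-I)\Phi x_k\Big). \]
   Context: Consider a finite discounted MDP with state space $\mathcal S=\{1,\dots,|\mathcal S|\}$, action space $\mathcal A=\{1,\dots,|\mathcal A|\}$, transition probabilities $P(s'\mid s,a)$, real rewards $r(s,a,s')$, expected reward $R(s,a)=\sum_{s'}P(s'\mid s,a)r(s,a,s')$, and discount factor $\gamma\in(0,1)$. State-action vectors are ordered as $(1,1),(2,1),\dots,(|\mathcal S|,1),(1,2),\dots$. The matrix $P$ has rows $P(\cdot\mid s,a)$, and $R$ has entries $R(s,a)$. For a state-action pair $i$, $e_i\in\mathbb R^{|\mathcal S||\mathcal A|}$ is the corresponding coordinate vector. A stochastic policy is a map $\mu:\mathcal S\to\Delta_{|\mathcal A|}$. The matrix $\Pi^\mu\in\mathbb R^{|\mathcal S|\times|\mathcal S||\mathcal A|}$ has entry $\mu(a\mid s)$ at row $s$, column $(s,a)$, and zeros elsewhere. The set $\Theta$ is the set of deterministic stationary policies.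 The feature matrix $\Phi$ has full column rank and rows $\phi(s,a)^\top$. Define $V_\theta(s):=\max_a\phi(s,a)^\top\theta$. The step size is $\alpha\in(0,1)$. Markovian observations: fix a behavior policy $b(a\mid s)$. The trajectory evolves as $s_{k+1}\sim P(\cdot\mid s_k,a_k)$, $r_{k+1}=r(s_k,a_k,s_{k+1})$, $a_{k+1}\sim b(\cdot\mid s_{k+1})$. The chain $X_k=(s_k,a_k)$ has a stationary distribution $d$ with $d>0$ everywhere, and $D=\mathrm{diag}(d)$. The filtration is $\mathcal F_k=\sigma(\theta_0,X_0,r_1,X_1,\dots,r_k,X_k)$, and $\theta_0$ is deterministic. The update is $\theta_{k+1}=\theta_k+\alpha\phi(X_k)\big(r_{k+1}+\gamma\max_u\phi(s_{k+1},u)^\top\theta_k-\phi(X_k)^\top\theta_k\big)$. Define $\delta(\theta):=R+\gamma PV_\theta-\Phi\theta$, \[ \xi_{k+1}:=\phi(X_k)\big(r_{k+1}+\gamma\max_u\phi(s_{k+1},u)^\top\theta_k-\phi(X_k)^\top\theta_k-e_{X_k}^\top\delta(\theta_k)\big), \] and $b_k:=\Phi^\top(e_{X_k}e_{X_k}^\top-D)\delta(\theta_k)$. Define $g(\theta):=\Phi^\top D\delta(\theta)$; a projected Bellman fixed point is a $\theta^\star$ with $g(\theta^\star)=0$. Define $A_\mu:=I-\alpha\Phi^\top D\Phi+\alpha\gamma\Phi^\top DP\Pi^\mu\Phi$, and let $\rho_\alpha^{\mathrm{dir}}$ be the joint spectral radius $\lim_k\max_{\pi_i\in\Theta}\|A_{\pi_k}\cdots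 A_{\pi_1}\|^{1/k}$. When $\rho_\alpha^{\mathrm{dir}}<1$, a unique projected Bellman fixed point exists. *)

(* Defs.v *)
From HB Require Import structures.
From mathcomp Require Import all_boot all_order all_algebra.
From mathcomp Require Import all_classical all_reals all_analysis.
Set Implicit Arguments. Unset Strict Implicit. Unset Printing Implicit Defensive.
Import Order.TTheory GRing.Theory Num.Theory.
Import numFieldNormedType.Exports.
Local Open Scope ring_scope.
Local Open Scope classical_set_scope.

(* State-action vectors are indexed by
   'I_(nA * nS); the pair (s,a) sits at index mxvec_index a s = a * nS + s,
   i.e. the ordering (1,1),(2,1),...,(|S|,1),(1,2),... of the paper. *)
Section Defs.
Variables (R : realType) (nS nA d : nat).
Local Notation S := 'I_nS.
Local Notation A := 'I_nA.
Local Notation N := (nA * nS)%N.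

Definition sa (s : S) (a : A) : 'I_N := mxvec_index a s.

Definition evec (s : S) (a : A) : 'cV[R]_N := delta_mx (sa s a) 0.

Definition savec (F : S -> A -> R) : 'cV[R]_N :=
  (mxvec (\matrix_(a < nA, s < nS) F s a))^T.

Definition stoch_policy (mu : S -> A -> R) : Prop :=
  (forall s a, 0 <= mu s a) /\ (forall s, \sum_(a : A) mu s a = 1).

Definition det_policy (pi : {ffun S -> A}) : S -> A -> R :=
  fun s a => (pi s == a)%:R.

(* Pi^mu : |S| x |S||A|, entry mu(a|s) at (s,(s,a)) *)
Definition Pimat (mu : S -> A -> R) : 'M[R]_(nS, N) :=
  \matrix_(s < nS, j < N)
     (mxvec (\matrix_(a < nA, s' < nS) ((s' == s)%:R * mu s a))) 0 j.

Variables (Phi : 'M[R]_(N, d)) (P : 'M[R]_(N, nS)).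

Definition feat (s : S) (a : A) : 'cV[R]_d := (row (sa s a) Phi)^T.

Definition trans (s : S) (a : A) (s' : S) : R := P (sa s a) s'.

Definition qval (theta : 'cV[R]_d) (s : S) (a : A) : R := (Phi *m theta) (sa s a) 0.

(* V_theta(s) = max_a phi(s,a)^T theta  (the seed is one of the values) *)
Definition vmax (theta : 'cV[R]_d) (s : S) : R :=
  \big[Num.max/head 0 [seq qval theta s a | a <- enum A]]_(a : A) qval theta s a.

Definition Vtheta (theta : 'cV[R]_d) : 'cV[R]_nS := \col_(s < nS) vmax theta s.

Variable (r : S -> A -> S -> R) (gamma alpha : R).

Definition Rexp : 'cV[R]_N := savec (fun s a => \sum_(s' : S) trans s a s' * r s a s').

Definition delta (theta : 'cV[R]_d) : 'cV[R]_N :=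
  Rexp + gamma *: (P *m Vtheta theta) - Phi *m theta.

Variable (dd : 'rV[R]_N).

Definition Dmat : 'M[R]_N := diag_mx dd.

Definition gfun (theta : 'cV[R]_d) : 'cV[R]_d := Phi^T *m Dmat *m delta theta.

Definition Amat (mu : S -> A -> R) : 'M[R]_d :=
  1%:M - alpha *: (Phi^T *m Dmat *m Phi)
       + (alpha * gamma) *: (Phi^T *m Dmat *m P *m Pimat mu *m Phi).

(* k-th term (k+1 factors) of the joint-spectral-radius sequence:
   max over pi_1..pi_{k+1} in Theta of ||A_{pi_{k+1}} ... A_{pi_1}||^{1/(k+1)};
   ||.|| is the (entrywise sup) matrix norm of mathcomp-analysis; all norms
   on 'M_d give the same limit. *)
Definition jsr_seq (k : nat) : R :=
  \big[Num.max/0]_(ps : {ffun 'I_k.+1 -> {ffun S -> A}})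
     (`| \big[mulmx/1%:M]_(i < k.+1) Amat (det_policy (ps (rev_ord i))) |
        `^ ((k.+1)%:R^-1)).

Definition jsr_lt1 : Prop :=
  exists2 rho : R, jsr_seq n @[n --> \oo] --> rho & rho < 1.

Definition td_step (theta : 'cV[R]_d) (x : S * A) (s' : S) : 'cV[R]_d :=
  theta + alpha *: ((r x.1 x.2 s' + gamma * vmax theta s' - qval theta x.1 x.2)
                     *: feat x.1 x.2).

(* theta_k as a function of the observed history X_0 = x0, X_1..X_k = hs
   (the rewards r_{j+1} = r(s_j,a_j,s_{j+1}) are determined by it) *)
Fixpoint theta_hist (theta : 'cV[R]_d) (x : S * A) (hs : seq (S * A)) : 'cV[R]_d :=
  match hs with
  | [::] => theta
  | y :: hs' => theta_hist (td_step theta x y.1) y hs'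
  end.

Definition xi_next (theta : 'cV[R]_d) (x : S * A) (s' : S) : 'cV[R]_d :=
  (r x.1 x.2 s' + gamma * vmax theta s' - qval theta x.1 x.2
     - delta theta (sa x.1 x.2) 0) *: feat x.1 x.2.

Definition b_term (theta : 'cV[R]_d) (x : S * A) : 'cV[R]_d :=
  Phi^T *m (evec x.1 x.2 *m (evec x.1 x.2)^T - Dmat) *m delta theta.

(* Conditional expectation given F_k of a quantity F(X_{k+1}) = F(s_{k+1},a_{k+1})
   (F may depend on the history up to k): by the Markov dynamics
   s_{k+1} ~ P(.|X_k), a_{k+1} ~ b(.|s_{k+1}). *)
Definition cond_next (b : S -> A -> R) (x : S * A) (F : S -> A -> 'cV[R]_d) : 'cV[R]_d :=
  \sum_(s' : S) \sum_(a' : A) (trans x.1 x.2 s' * b s' a') *: F s' a'.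

End Defs.

Definition stationary (R : realType) (nS nA : nat) (P : 'M[R]_(nA * nS, nS))
  (b : 'I_nS -> 'I_nA -> R) (dd : 'rV[R]_(nA * nS)) : Prop :=
  forall (s' : 'I_nS) (a' : 'I_nA),
    dd 0 (sa s' a') =
      \sum_(s : 'I_nS) \sum_(a : 'I_nA) dd 0 (sa s a) * trans P s a s' * b s' a'.

(* Main.v *)
Require Import Defs.
From HB Require Import structures.
From mathcomp Require Import all_boot all_order all_algebra.
From mathcomp Require Import all_classical all_reals all_analysis.
Import Order.TTheory GRing.Theory Num.Theory.
Import numFieldNormedType.Exports.
Local Open Scope ring_scope.

Lemma sum_ind (R : realType) (I : finType) (i : I) (F : I -> R) :
  \sum_j (j == i)%:R * F j = F i.
Proof.
rewrite (bigD1 i) //= eqxx mul1r big1 ?addr0 // => j /negbTE ->; by rewrite mul0r.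
Qed.

Lemma mu_state (R : realType) (I : finType) (u v : I -> R) Vu Vv a1 a2 :
  (forall a, u a <= Vu) -> Vu = u a1 -> (forall a, v a <= Vv) -> Vv = v a2 ->
  exists m : I -> R, [/\ (forall a, 0 <= m a), \sum_a m a = 1 &
     \sum_a m a * (u a - v a) = Vu - Vv].
Proof.
move=> hu eu hv ev.
set hi := u a1 - v a1; set lo := u a2 - v a2.
have hhi : Vu - Vv <= hi by rewrite /hi -eu lerD2l lerN2 hv.
have hlo : lo <= Vu - Vv by rewrite /lo -ev lerD2r hu.
set l := (Vu - Vv - lo) / (hi - lo).
have l0 : 0 <= l by rewrite /l divr_ge0 // subr_ge0 // (le_trans hlo hhi).
have l1 : l <= 1.
  have [E|E] := eqVneq hi lo.
    by rewrite /l E subrr invr0 mulr0 ler01.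
  have hp : 0 < hi - lo.
    by rewrite subr_gt0 lt_neqAle eq_sym E (le_trans hlo hhi).
  by rewrite /l ler_pdivrMr // mul1r lerD2r.
have key : l * (hi - lo) = Vu - Vv - lo.
  have [E|E] := eqVneq hi lo.
    rewrite E subrr mulr0; apply/eqP; rewrite eq_sym subr_eq0 eq_le hlo.
    by rewrite -E hhi.
  by rewrite /l divfK // subr_eq0.
exists (fun a => l * (a == a1)%:R + (1 - l) * (a == a2)%:R); split.
- move=> a; apply: addr_ge0; apply: mulr_ge0 => //; by rewrite subr_ge0.
- rewrite big_split /= -!mulr_sumr.
  rewrite (eq_bigr (fun j => (j == a1)%:R * 1)) ?sum_ind; last by move=> *; rewrite mulr1.
  rewrite (eq_bigr (fun j => (j == a2)%:R * 1)) ?sum_ind; last by move=> *; rewrite mulr1.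
  by rewrite !mulr1 addrC subrK.
- under eq_bigr do rewrite mulrDl -!mulrA.
  rewrite big_split /= -!mulr_sumr !sum_ind -/hi -/lo.
  rewrite mulrA -/l mulrBl mul1r addrA addrAC -mulrBr key; by rewrite subrK.

Qed.
Section H.
Variables (R : realType) (nS nA d : nat).
Local Notation S := 'I_nS.
Local Notation A := 'I_nA.
Local Notation N := (nA * nS)%N.

Lemma bigmax_ge (I : finType) (F : I -> R) x0 i :
  F i <= \big[Num.max/x0]_(j : I) F j.
Proof.
rewrite /index_enum; have : i \in index_enum I by rewrite mem_index_enum.
rewrite /index_enum.
elim: (Finite.enum I) => [|j l IH] //=.
rewrite big_cons inE le_max => /orP[/eqP->|/IH->]; first by rewrite lexx.
by rewrite orbT.
Qed.

Lemma bigmax_ex (I : finType) (F : I -> R) x0 :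
  (exists i, x0 = F i) -> exists i, \big[Num.max/x0]_(j : I) F j = F i.
Proof.
move=> H0; apply: (big_ind (fun x => exists i, x = F i)) => //.
  move=> x y [i ->] [j ->]; case: (leP (F i) (F j)) => _; by eauto.
by move=> i _; exists i.
Qed.

Variable (Phi : 'M[R]_(N, d)).
Hypothesis nA0 : (0 < nA)%N.

Lemma vmax_ge th s a : qval Phi th s a <= vmax Phi th s.
Proof. exact: bigmax_ge. Qed.

Lemma vmax_ex th s : exists a, vmax Phi th s = qval Phi th s a.
Proof.
apply: bigmax_ex.
case E: (enum A) => [|a l] /=.
  by move: (size_enum_ord nA); rewrite E /= => H; exfalso; move: nA0; rewrite -H.
by exists a.
Qed.

End H.
Lemma zid (V : zmodType) (e b c u w : V) : e + b - u = e + c - w + ((b - c) - (u - w)).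
Proof.
rewrite opprB !addrA (addrAC _ b) (addrAC _ b) (addrAC _ (-c)) (addrAC _ (-c)) subrK (addrAC e c b) addrK.
done.
Qed.

Section H.
Variables (R : realType) (nS nA d : nat).
Local Notation S := 'I_nS.
Local Notation A := 'I_nA.
Local Notation N := (nA * nS)%N.
Variables (Phi : 'M[R]_(N, d)) (P : 'M[R]_(N, nS)) (r : S -> A -> S -> R).

Lemma Pimat_mul (m : S -> A -> R) (v : 'cV[R]_N) s :
  (Pimat m *m v) s 0 = \sum_a m s a * v (sa s a) 0.
Proof.
rewrite mxE (reindex (uncurry (@mxvec_index nA nS))); last first.
  by apply: onW_bij; have [g h1 h2] := curry_mxvec_bij nA nS; exists g => x; [apply h1|apply h2].
rewrite (eq_bigr (fun p => Pimat m s (mxvec_index p.1 p.2) * v (mxvec_index p.1 p.2) 0)); last by case.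
rewrite -(pair_bigA _ (fun a s2 => Pimat m s (mxvec_index a s2) * v (mxvec_index a s2) 0)) /=.
apply: eq_bigr => a _.
rewrite (bigD1 s) //= big1 ?addr0.
  by rewrite mxE mxvecE mxE eqxx mul1r.
by move=> s' /negbTE ne; rewrite mxE mxvecE mxE ne mul0r mul0r.
Qed.

Lemma feat_evec s a : Phi^T *m evec R s a = feat Phi s a.
Proof. by rewrite /feat /evec tr_row colE. Qed.

Lemma evec_tr s a (w : 'cV[R]_N) : (evec R s a)^T *m w = (w (sa s a) 0)%:M.
Proof.
rewrite /evec trmx_delta -rowE [LHS]mx11_scalar.
by rewrite mxE.
Qed.

Lemma Rexp_entry s a : Rexp P r (sa s a) 0 = \sum_s' trans P s a s' * r s a s'.
Proof. by rewrite /Rexp /savec mxE mxvecE mxE. Qed.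

Variables (gamma alpha : R) (dd : 'rV[R]_N).

Lemma theta_hist_rcons th x hs y :
  theta_hist Phi r gamma alpha th x (rcons hs y)
  = td_step Phi r gamma alpha (theta_hist Phi r gamma alpha th x hs) (last x hs) y.1.
Proof. by elim: hs th x => [|z hs IH] th x //=. Qed.

Lemma PiV (m : S -> A -> R) th ths :
  (forall s, \sum_a m s a * (qval Phi th s a - qval Phi ths s a)
             = vmax Phi th s - vmax Phi ths s) ->
  Pimat m *m Phi *m (th - ths) = Vtheta Phi th - Vtheta Phi ths.
Proof.
move=> H; apply/matrixP => s j; rewrite ord1 -mulmxA Pimat_mul !mxE -H.
apply: eq_bigr => a _; congr (_ * _).
by rewrite /qval mulmxBr !mxE.
Qed.

Lemma delta_eq (m : S -> A -> R) th ths :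
  Pimat m *m Phi *m (th - ths) = Vtheta Phi th - Vtheta Phi ths ->
  delta Phi P r gamma th = delta Phi P r gamma ths
     + (gamma *: (P *m Pimat m) - 1%:M) *m Phi *m (th - ths).
Proof.
move=> H; rewrite /delta mulmxBl mul1mx mulmxBl -!scalemxAl -!mulmxA (mulmxA (Pimat m)) H.
rewrite mulmxBr scalerBr mulmxBr.
exact: zid.
Qed.

End H.

Lemma zid2 (V : zmodType) (G e c : V) : G + ((e - G) + (c - e)) = c.
Proof. by rewrite addrA (addrC G) subrK addrC subrK. Qed.

Lemma zid3 (V : zmodType) (t s a g b : V) : t + a - s = t - s + g + (b - g) + (a - b).
Proof.
by rewrite -(addrA (t - s + g)) -(addrA (t - s)) zid2 addrAC.
Qed.

Section H5.
Variables (R : realType) (nS nA d : nat).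
Local Notation S := 'I_nS.
Local Notation A := 'I_nA.
Local Notation N := (nA * nS)%N.
Variables (Phi : 'M[R]_(N, d)) (P : 'M[R]_(N, nS)) (r : S -> A -> S -> R).
Variables (gamma alpha : R) (dd : 'rV[R]_N).

Lemma bterm_eq th (X : S * A) :
  b_term Phi P r gamma dd th X =
  delta Phi P r gamma th (sa X.1 X.2) 0 *: feat Phi X.1 X.2
    - Phi^T *m Dmat dd *m delta Phi P r gamma th.
Proof.
rewrite /b_term (mulmxBr Phi^T) (mulmxBl (Phi^T *m _)) mulmxA -(mulmxA _ _ (delta _ _ _ _ _)).
by rewrite feat_evec -mulmxA evec_tr mul_mx_scalar.
Qed.

Lemma Amat_eq (m : S -> A -> R) (x : 'cV[R]_d) :
  Amat Phi P gamma alpha dd m *m x =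
  x + alpha *: (Phi^T *m Dmat dd *m ((gamma *: (P *m Pimat m) - 1%:M) *m Phi *m x)).
Proof.
rewrite /Amat !mulmxDl mulNmx mul1mx -!scalemxAl.
rewrite !mulNmx mul1mx mulmxDr mulmxN scalerDr scalerN -!scalemxAr scalerA !mulmxA -addrA [in RHS](addrC (_ *: _)). done.
Qed.


Lemma delta_entry th s a :
  delta Phi P r gamma th (sa s a) 0 =
  \sum_s' trans P s a s' * r s a s' + gamma * \sum_s' trans P s a s' * vmax Phi th s'
  - qval Phi th s a.
Proof.
rewrite /delta mxE mxE Rexp_entry !mxE; congr (_ + _ * _ + _).
  by apply: eq_bigr => sx _; rewrite mxE.
by rewrite /qval mxE.
Qed.

Lemma cond_next_xi (b : S -> A -> R) th X :
  (forall s, \sum_a b s a = 1) -> (forall s a, \sum_s' trans P s a s' = 1) ->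
  cond_next P b X (fun s' _ => xi_next Phi P r gamma th X s') = 0.
Proof.
move=> hb hT; rewrite /cond_next.
under eq_bigr do rewrite -scaler_suml -mulr_sumr hb mulr1.
rewrite /xi_next; under eq_bigr do rewrite scalerA.
rewrite -scaler_suml delta_entry.
set Q := qval Phi th X.1 X.2.
under eq_bigr do rewrite !mulrBr mulrDr mulrCA.
rewrite !sumrB big_split /= -!mulr_sumr -!mulr_suml hT !mul1r.
by rewrite opprB addrA subrK subrr scale0r.
Qed.

End H5.

Theorem proposition3 (R : realType) (nS nA d : nat)
  (Phi : 'M[R]_(nA * nS, d)) (P : 'M[R]_(nA * nS, nS))
  (r : 'I_nS -> 'I_nA -> 'I_nS -> R) (gamma alpha : R)
  (b : 'I_nS -> 'I_nA -> R) (dd : 'rV[R]_(nA * nS))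
  (theta0 thetastar : 'cV[R]_d) :
  (0 < nS)%N -> (0 < nA)%N ->
  (forall s a s', 0 <= trans P s a s') ->
  (forall s a, \sum_(s' : 'I_nS) trans P s a s' = 1) ->
  0 < gamma < 1 -> 0 < alpha < 1 ->
  \rank Phi = d ->
  stoch_policy b ->
  (forall j, 0 < dd 0 j) -> \sum_(j < nA * nS) dd 0 j = 1 ->
  stationary P b dd ->
  jsr_lt1 Phi P gamma alpha dd ->
  gfun Phi P r gamma dd thetastar = 0 ->
  exists mu : 'I_nS * 'I_nA -> seq ('I_nS * 'I_nA) -> ('I_nS -> 'I_nA -> R),
    forall (x0 : 'I_nS * 'I_nA) (hs : seq ('I_nS * 'I_nA)),
      let X := last x0 hs in
      let thk := theta_hist Phi r gamma alpha theta0 x0 hs in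
      let xk := thk - thetastar in
      let bk := b_term Phi P r gamma dd thk X in
      [/\ stoch_policy (mu x0 hs),
          (forall y : 'I_nS * 'I_nA,
             theta_hist Phi r gamma alpha theta0 x0 (rcons hs y) - thetastar
             = Amat Phi P gamma alpha dd (mu x0 hs) *m xk
               + alpha *: bk + alpha *: xi_next Phi P r gamma thk X y.1),
          cond_next P b X (fun s' _ => xi_next Phi P r gamma thk X s') = 0 &
          bk = Phi^T *m (evec R X.1 X.2 *m (evec R X.1 X.2)^T - Dmat dd)
                 *m (Rexp P r + gamma *: (P *m Vtheta Phi thetastar)
                     - Phi *m thetastar
                     + (gamma *: (P *m Pimat (mu x0 hs)) - 1%:M) *m Phi *m xk)].
Proof.
move=> nS0 nA0 hT0 hT1 hg ha hrk hb hd0 hd1 hst hjsr hg0.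
have hmu : forall th, exists m : 'I_nS -> 'I_nA -> R, stoch_policy m /\
   (forall s, \sum_a m s a * (qval Phi th s a - qval Phi thetastar s a)
              = vmax Phi th s - vmax Phi thetastar s).
  move=> th.
  have hs : forall s, exists ms : 'I_nA -> R, [/\ forall a, 0 <= ms a, \sum_a ms a = 1 &
     \sum_a ms a * (qval Phi th s a - qval Phi thetastar s a)
       = vmax Phi th s - vmax Phi thetastar s].
    move=> s; have [a1 e1] := vmax_ex _ _ _ _ Phi nA0 th s.
    have [a2 e2] := vmax_ex _ _ _ _ Phi nA0 thetastar s.
    by apply: mu_state e1 _ e2 => a; exact: vmax_ge.
  case: (boolp.choice hs) => f hf.
  exists f; split; [split|] => s; by case: (hf s).
case: (boolp.choice hmu) => M hM.
exists (fun x0 hs => M (theta_hist Phi r gamma alpha theta0 x0 hs)).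
move=> x0 hs X thk xk bk.
have [hsto hM2] := hM thk.
have hPi := @PiV _ _ _ _ Phi _ _ _ hM2.
have hdel := @delta_eq _ _ _ _ Phi P r gamma _ _ _ hPi.
split => //.
- move=> y; rewrite theta_hist_rcons -/X -/thk Amat_eq /bk bterm_eq.
  have E : (gamma *: (P *m Pimat (M thk)) - 1%:M) *m Phi *m xk
           = delta Phi P r gamma thk - delta Phi P r gamma thetastar.
    by rewrite hdel [RHS]addrC addKr.
  rewrite E mulmxBr; rewrite /gfun in hg0; rewrite hg0 subr0.
  rewrite /td_step /xi_next /xk.
  set c := (r X.1 X.2 y.1 + _ - _); set F := feat _ _ _.
  set G := Phi^T *m _ *m _; set e := delta _ _ _ _ _ _ _.
  by rewrite (scalerBl c e F) !scalerDr ?scalerN; exact: zid3.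
- by case: hb => _ hb2; exact: (@cond_next_xi _ _ _ _ Phi P r gamma b thk X hb2 hT1).
- by rewrite /bk /b_term hdel.
Qed.
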